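(* Let $X$ be a separable real Banach space with property (au$^*$). Then $X^*$ has no proper closed norming subspace; i.e. if $M\subseteq X^*$ is a norm-closed linear subspace such that $\|x\|=\sup\{|m(x)|: m\in M,\ \|m\|\le 1\}$ for every $x\in X$, then $M=X^*$. Consequently $X^*$ is separable.
   Context: All Banach spaces are real. A separable Banach space $X$ has property (au$^*$) if $\lim_{n\to\infty}(\|x^*+x_n^*\|-\|x^*-x_n^*\|)=0$ whenever $x^*\in X^*$ and $(x_n^* )_{n\ge1}$ is a weak$^*$-null sequence in $X^*$. *)

(* Defs.v *)
From Stdlib Require Import Reals ClassicalEpsilon.
Open Scope R_scope.

Record NormedSpace := {
  ns_car :> Type;
  ns_zero : ns_car;
  ns_add : ns_car -> ns_car -> ns_car;
  ns_opp : ns_car -> ns_car;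
  ns_scal : R -> ns_car -> ns_car;
  ns_norm : ns_car -> R;
  ns_add_assoc : forall x y z, ns_add x (ns_add y z) = ns_add (ns_add x y) z;
  ns_add_comm : forall x y, ns_add x y = ns_add y x;
  ns_add_zero : forall x, ns_add x ns_zero = x;
  ns_add_opp : forall x, ns_add x (ns_opp x) = ns_zero;
  ns_scal_assoc : forall a b x, ns_scal a (ns_scal b x) = ns_scal (a * b) x;
  ns_scal_one : forall x, ns_scal 1 x = x;
  ns_scal_distr_l : forall a x y, ns_scal a (ns_add x y) = ns_add (ns_scal a x) (ns_scal a y);
  ns_scal_distr_r : forall a b x, ns_scal (a + b) x = ns_add (ns_scal a x) (ns_scal b x);
  ns_norm_eq0 : forall x, ns_norm x = 0 -> x = ns_zero;
  ns_norm_scal : forall a x, ns_norm (ns_scal a x) = Rabs a * ns_norm x;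
  ns_norm_triangle : forall x y, ns_norm (ns_add x y) <= ns_norm x + ns_norm y
}.

Arguments ns_zero {_}. Arguments ns_add {_} _ _. Arguments ns_opp {_} _.
Arguments ns_scal {_} _ _. Arguments ns_norm {_} _.

Definition ns_sub {X : NormedSpace} (x y : X) : X := ns_add x (ns_opp y).

Definition complete (X : NormedSpace) : Prop :=
  forall u : nat -> X,
    (forall eps, eps > 0 -> exists N, forall m n, (m >= N)%nat -> (n >= N)%nat ->
        ns_norm (ns_sub (u m) (u n)) < eps) ->
    exists l : X, forall eps, eps > 0 -> exists N, forall n, (n >= N)%nat ->
        ns_norm (ns_sub (u n) l) < eps.

Definition separable (X : NormedSpace) : Prop :=
  exists d : nat -> X, forall x : X, forall eps, eps > 0 ->
    exists n, ns_norm (ns_sub x (d n)) < eps.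

Definition in_dual (X : NormedSpace) (f : X -> R) : Prop :=
  (forall x y, f (ns_add x y) = f x + f y) /\
  (forall a x, f (ns_scal a x) = a * f x) /\
  (exists C, forall x, Rabs (f x) <= C * ns_norm x).

Definition dnorm (X : NormedSpace) (f : X -> R) : R :=
  epsilon (inhabits 0)
    (is_lub (fun r => exists x : X, ns_norm x <= 1 /\ r = Rabs (f x))).

Definition weak_star_null (X : NormedSpace) (fs : nat -> X -> R) : Prop :=
  (forall n, in_dual X (fs n)) /\ (forall x : X, Un_cv (fun n => fs n x) 0).

Definition property_au_star (X : NormedSpace) : Prop :=
  forall (g : X -> R) (fs : nat -> X -> R),
    in_dual X g -> weak_star_null X fs ->
    Un_cv (fun n => dnorm X (fun x => g x + fs n x) - dnorm X (fun x => g x - fs n x)) 0.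

Definition dual_subspace (X : NormedSpace) (M : (X -> R) -> Prop) : Prop :=
  (forall f, M f -> in_dual X f) /\
  M (fun _ => 0) /\
  (forall f g, M f -> M g -> M (fun x => f x + g x)) /\
  (forall a f, M f -> M (fun x => a * f x)).

Definition dual_norm_closed (X : NormedSpace) (M : (X -> R) -> Prop) : Prop :=
  forall (u : nat -> X -> R) (f : X -> R),
    (forall n, M (u n)) -> in_dual X f ->
    Un_cv (fun n => dnorm X (fun x => u n x - f x)) 0 -> M f.

Definition norming (X : NormedSpace) (M : (X -> R) -> Prop) : Prop :=
  forall x : X,
    is_lub (fun r => exists m, M m /\ dnorm X m <= 1 /\ r = Rabs (m x)) (ns_norm x).

Definition dual_separable (X : NormedSpace) : Prop :=
  exists d : nat -> X -> R, (forall n, in_dual X (d n)) /\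
    forall f, in_dual X f -> forall eps, eps > 0 ->
      exists n, dnorm X (fun x => f x - d n x) < eps.

(* Main.v *)
Require Import Defs.
From Stdlib Require Import Reals Lra Lia Psatz ClassicalEpsilon Classical FunctionalExtensionality ZArith Cantor.
Open Scope R_scope.

Lemma add_cancel (X : NormedSpace) (a b c : X) : ns_add a b = ns_add a c -> b = c.
Proof.
  intro H.
  assert (E : forall z : X, ns_add (ns_opp a) (ns_add a z) = z).
  { intro z. rewrite ns_add_assoc, (ns_add_comm _ (ns_opp a)), ns_add_opp.
    rewrite ns_add_comm. apply ns_add_zero. }
  rewrite <- (E b), <- (E c), H. reflexivity.
Qed.

Lemma scal0 (X : NormedSpace) (x : X) : ns_scal 0 x = ns_zero.
Proof.
  apply (add_cancel X (ns_scal 0 x)). rewrite ns_add_zero. rewrite <- (ns_scal_distr_r X).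
  f_equal. ring.
Qed.

Lemma norm_zero (X : NormedSpace) : ns_norm (@ns_zero X) = 0.
Proof.
  rewrite <- (scal0 X ns_zero), ns_norm_scal, Rabs_R0. ring.
Qed.

Lemma opp_scal (X : NormedSpace) (x : X) : ns_opp x = ns_scal (-1) x.
Proof.
  apply (add_cancel X x). rewrite ns_add_opp.
  rewrite <- (ns_scal_one X x) at 1. rewrite <- ns_scal_distr_r.
  replace (1 + -1) with 0 by ring. rewrite scal0. reflexivity.
Qed.

Lemma norm_opp (X : NormedSpace) (x : X) : ns_norm (ns_opp x) = ns_norm x.
Proof.
  rewrite opp_scal, ns_norm_scal. rewrite Rabs_left by lra. ring.
Qed.

Lemma norm_nonneg (X : NormedSpace) (x : X) : 0 <= ns_norm x.
Proof.
  pose proof (ns_norm_triangle X x (ns_opp x)) as H.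
  rewrite ns_add_opp, norm_zero, norm_opp in H. lra.
Qed.

Lemma norm_sub_sym (X : NormedSpace) (x y : X) : ns_norm (ns_sub x y) = ns_norm (ns_sub y x).
Proof.
  unfold ns_sub. rewrite <- norm_opp. f_equal.
  apply (add_cancel X (ns_add x (ns_opp y))). rewrite ns_add_opp.
  rewrite ns_add_assoc. rewrite <- (ns_add_assoc _ x (ns_opp y) y).
  rewrite (ns_add_comm _ (ns_opp y) y), ns_add_opp, ns_add_zero, ns_add_opp. reflexivity.
Qed.

Lemma add_sub (X : NormedSpace) (x y : X) : ns_add y (ns_sub x y) = x.
Proof.
  unfold ns_sub. rewrite ns_add_assoc, (ns_add_comm _ y x), <- ns_add_assoc, ns_add_opp.
  apply ns_add_zero.
Qed.

Lemma norm_sub_tri (X : NormedSpace) (x y z : X) :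
  ns_norm (ns_sub x z) <= ns_norm (ns_sub x y) + ns_norm (ns_sub y z).
Proof.
  replace (ns_sub x z) with (ns_add (ns_sub x y) (ns_sub y z)).
  - apply ns_norm_triangle.
  - apply (add_cancel X z). rewrite add_sub.
    rewrite (ns_add_comm _ (ns_sub x y)), ns_add_assoc, add_sub, add_sub. reflexivity.
Qed.

Lemma norm_rev_tri (X : NormedSpace) (x y : X) :
  ns_norm x - ns_norm (ns_sub x y) <= ns_norm y.
Proof.
  pose proof (ns_norm_triangle X y (ns_sub x y)). rewrite add_sub in H. lra.
Qed.

Lemma lin_zero (X : NormedSpace) (f : X -> R) : in_dual X f -> f ns_zero = 0.
Proof.
  intros [Ha [Hs _]]. rewrite <- (scal0 X ns_zero), Hs. ring.
Qed.

Lemma lin_opp (X : NormedSpace) (f : X -> R) x : in_dual X f -> f (ns_opp x) = - f x.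
Proof.
  intros Hf. destruct Hf as [Ha [Hs _]]. rewrite opp_scal, Hs. ring.
Qed.

Lemma lin_sub (X : NormedSpace) (f : X -> R) x y : in_dual X f -> f (ns_sub x y) = f x - f y.
Proof.
  intros Hf. unfold ns_sub. rewrite (proj1 Hf), lin_opp by auto. ring.
Qed.

Lemma in_dual_comb (X : NormedSpace) (f g : X -> R) a b :
  in_dual X f -> in_dual X g -> in_dual X (fun x => a * f x + b * g x).
Proof.
  intros [Fa [Fs [C HC]]] [Ga [Gs [D HD]]]. split; [|split].
  - intros x y. rewrite Fa, Ga. ring.
  - intros c x. rewrite Fs, Gs. ring.
  - exists (Rabs a * Rmax C 0 + Rabs b * Rmax D 0). intro x.
    specialize (HC x). specialize (HD x). pose proof (norm_nonneg X x).
    pose proof (Rmax_l C 0). pose proof (Rmax_r C 0).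
    pose proof (Rmax_l D 0). pose proof (Rmax_r D 0).
    eapply Rle_trans. apply Rabs_triang. rewrite !Rabs_mult.
    pose proof (Rabs_pos a). pose proof (Rabs_pos b).
    assert (Rabs (f x) <= Rmax C 0 * ns_norm x) by nra.
    assert (Rabs (g x) <= Rmax D 0 * ns_norm x) by nra. nra.
Qed.

Lemma in_dual_ext (X : NormedSpace) (f g : X -> R) :
  (forall x, f x = g x) -> in_dual X f -> in_dual X g.
Proof.
  intros E H. replace g with f; auto. apply functional_extensionality; auto.
Qed.

Lemma in_dual_add (X : NormedSpace) (f g : X -> R) :
  in_dual X f -> in_dual X g -> in_dual X (fun x => f x + g x).
Proof. intros. eapply in_dual_ext; [|apply (in_dual_comb X f g 1 1); auto]. intro; simpl; ring. Qed.

Lemma in_dual_sub (X : NormedSpace) (f g : X -> R) :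
  in_dual X f -> in_dual X g -> in_dual X (fun x => f x - g x).
Proof. intros. eapply in_dual_ext; [|apply (in_dual_comb X f g 1 (-1)); auto]. intro; simpl; ring. Qed.

Lemma in_dual_scal (X : NormedSpace) (f : X -> R) a :
  in_dual X f -> in_dual X (fun x => a * f x).
Proof. intros. eapply in_dual_ext; [|apply (in_dual_comb X f f a 0); auto]. intro; simpl; ring. Qed.

Lemma in_dual_zero (X : NormedSpace) : in_dual X (fun _ => 0).
Proof.
  split; [|split]. intros; ring. intros; ring. exists 0. intro. rewrite Rabs_R0.
  pose proof (norm_nonneg X x). nra.
Qed.

Lemma dnorm_spec (X : NormedSpace) (f : X -> R) : in_dual X f ->
  is_lub (fun r => exists x : X, ns_norm x <= 1 /\ r = Rabs (f x)) (dnorm X f).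
Proof.
  intros Hf. unfold dnorm. apply epsilon_spec.
  destruct Hf as [_ [_ [C HC]]].
  destruct (completeness (fun r => exists x : X, ns_norm x <= 1 /\ r = Rabs (f x))) as [l Hl].
  - exists (Rmax C 0). intros r [x [Hx ->]]. specialize (HC x).
    pose proof (norm_nonneg X x). pose proof (Rmax_l C 0). pose proof (Rmax_r C 0). nra.
  - exists (Rabs (f ns_zero)). exists ns_zero. split; auto. rewrite norm_zero. lra.
  - exists l. exact Hl.
Qed.

Lemma dnorm_nonneg (X : NormedSpace) (f : X -> R) : in_dual X f -> 0 <= dnorm X f.
Proof.
  intros Hf. destruct (dnorm_spec X f Hf) as [Hub _].
  apply Rle_trans with (Rabs (f ns_zero)). apply Rabs_pos.
  apply Hub. exists ns_zero. rewrite norm_zero. split; auto; lra.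
Qed.

Lemma dnorm_bound (X : NormedSpace) (f : X -> R) x : in_dual X f ->
  Rabs (f x) <= dnorm X f * ns_norm x.
Proof.
  intros Hf. pose proof (dnorm_nonneg X f Hf). destruct (dnorm_spec X f Hf) as [Hub _].
  destruct (Req_dec (ns_norm x) 0) as [E|E].
  - apply ns_norm_eq0 in E. subst x. rewrite lin_zero, norm_zero, Rabs_R0 by auto. lra.
  - pose proof (norm_nonneg X x).
    assert (P : 0 < ns_norm x) by lra.
    assert (H1 : Rabs (f (ns_scal (/ ns_norm x) x)) <= dnorm X f).
    { apply Hub. exists (ns_scal (/ ns_norm x) x). split; auto.
      rewrite ns_norm_scal, Rabs_right. field_simplify; lra.
      left. apply Rinv_0_lt_compat; auto. }
    destruct Hf as [_ [Hs _]]. rewrite Hs, Rabs_mult, Rabs_right in H1.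
    2: left; apply Rinv_0_lt_compat; auto.
    apply (Rmult_le_compat_l (ns_norm x)) in H1; [|lra].
    rewrite <- Rmult_assoc, Rinv_r in H1 by lra. lra.
Qed.

Lemma dnorm_le (X : NormedSpace) (f : X -> R) c : in_dual X f -> 0 <= c ->
  (forall x, Rabs (f x) <= c * ns_norm x) -> dnorm X f <= c.
Proof.
  intros Hf Hc H. destruct (dnorm_spec X f Hf) as [_ Hl]. apply Hl.
  intros r [x [Hx ->]]. specialize (H x). nra.
Qed.

Lemma dnorm_le1 (X : NormedSpace) (f : X -> R) : in_dual X f ->
  dnorm X f <= 1 -> forall x, Rabs (f x) <= ns_norm x.
Proof.
  intros Hf H x. pose proof (dnorm_bound X f x Hf). pose proof (norm_nonneg X x). nra.
Qed.

Lemma dnorm_ext (X : NormedSpace) (f g : X -> R) : (forall x, f x = g x) -> dnorm X f = dnorm X g.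
Proof. intros E. replace g with f; auto. apply functional_extensionality; auto. Qed.

Lemma dnorm_sym (X : NormedSpace) (f g : X -> R) : in_dual X f -> in_dual X g ->
  dnorm X (fun x => f x - g x) = dnorm X (fun x => g x - f x).
Proof.
  intros Hf Hg. pose proof (in_dual_sub X f g Hf Hg). pose proof (in_dual_sub X g f Hg Hf).
  apply Rle_antisym; apply dnorm_le; auto using dnorm_nonneg; intro x.
  - rewrite Rabs_minus_sym. apply (dnorm_bound X (fun x => g x - f x)); auto.
  - rewrite Rabs_minus_sym. apply (dnorm_bound X (fun x => f x - g x)); auto.
Qed.

Lemma dnorm_scal_ge (X : NormedSpace) (k : X -> R) a : in_dual X k -> 0 < a ->
  a * dnorm X k <= dnorm X (fun x => a * k x).
Proof.
  intros Hk Ha. pose proof (in_dual_scal X k a Hk) as H2.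
  pose proof (dnorm_nonneg X _ H2).
  assert (H0 : dnorm X k <= dnorm X (fun x => a * k x) / a).
  { apply dnorm_le; auto. unfold Rdiv; apply Rmult_le_pos; [lra | left; apply Rinv_0_lt_compat; lra]. intro x.
    pose proof (dnorm_bound X _ x H2) as B. simpl in B. rewrite Rabs_mult, (Rabs_right a) in B by lra.
    apply (Rmult_le_reg_l a); auto. unfold Rdiv. replace (a * (dnorm X (fun x0 : X => a * k x0) * / a * ns_norm x))
     with (dnorm X (fun x0 : X => a * k x0) * ns_norm x) by (field; lra). auto. }
  apply (Rmult_le_compat_l a) in H0; [|lra]. unfold Rdiv in H0.
  replace (a * (dnorm X (fun x : X => a * k x) * / a)) with (dnorm X (fun x : X => a * k x)) in H0 by (field; lra).
  auto.
Qed.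

Lemma M_ext (X : NormedSpace) (M : (X -> R) -> Prop) f g : (forall x, f x = g x) -> M f -> M g.
Proof. intros E. replace g with f; auto. apply functional_extensionality; auto. Qed.

Lemma M_comb (X : NormedSpace) (M : (X -> R) -> Prop) f g a b : dual_subspace X M ->
  M f -> M g -> M (fun x => a * f x + b * g x).
Proof.
  intros [_ [_ [Ha Hs]]] Hf Hg. apply (Ha (fun x => a * f x) (fun x => b * g x)); apply Hs; auto.
Qed.

Lemma approx_inf {A : Type} (P : A -> Prop) (F : A -> R) (th : R) :
  (exists a, P a) -> (forall a, P a -> 0 <= F a) -> th > 0 ->
  exists a0, P a0 /\ forall a, P a -> F a0 <= F a + th.
Proof.
  intros [a1 Ha1] Hpos Hth.
  destruct (completeness (fun r => exists a, P a /\ r = - F a)) as [L [HL1 HL2]].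
  - exists 0. intros r [a [Pa ->]]. specialize (Hpos a Pa). lra.
  - exists (- F a1). eauto.
  - apply NNPP. intro Hn.
    assert (L <= L - th). 2: lra.
    apply HL2. intros r [a [Pa ->]].
    apply Rnot_lt_le. intro Hlt. apply Hn. exists a. split; auto.
    intros b Pb. assert (- F b <= L) by (apply HL1; eauto). lra.
Qed.

Fixpoint Bk (X : NormedSpace) (d : nat -> X) (k : nat) (u v : X -> R) : R :=
  match k with O => 0 | S k => Bk X d k u v + u (d k) * v (d k) end.

Fixpoint xs (X : NormedSpace) (d : nat -> X) (k : nat) (a : X -> R) : X :=
  match k with O => ns_zero | S k => ns_add (xs X d k a) (ns_scal (a (d k)) (d k)) end.

Lemma B_eval (X : NormedSpace) d k a m : in_dual X m -> m (xs X d k a) = Bk X d k a m.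
Proof.
  intros Hm. induction k; simpl. apply lin_zero; auto.
  destruct Hm as [Ha [Hs _]]. rewrite Ha, Hs, IHk. ring.
Qed.

Lemma B_nonneg (X : NormedSpace) d k u : 0 <= Bk X d k u u.
Proof. induction k; simpl. lra. nra. Qed.

Lemma B_expand (X : NormedSpace) d k u v t :
  Bk X d k (fun y => u y - t * v y) (fun y => u y - t * v y) =
  Bk X d k u u - 2 * t * Bk X d k u v + t * t * Bk X d k v v.
Proof. induction k; simpl. ring. rewrite IHk. ring. Qed.

Lemma B_sub_r (X : NormedSpace) d k a u v :
  Bk X d k a (fun y => u y - v y) = Bk X d k a u - Bk X d k a v.
Proof. induction k; simpl. ring. rewrite IHk. ring. Qed.

Lemma B_bound (X : NormedSpace) d k v w : (forall y, Rabs (v y) <= w y) ->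
  Bk X d k v v <= Bk X d k w w.
Proof.
  intros H. induction k; simpl. lra. specialize (H (d k)).
  pose proof (Rabs_pos (v (d k))).
  assert (v (d k) * v (d k) <= w (d k) * w (d k)).
  { assert (E : v (d k) * v (d k) = Rabs (v (d k)) * Rabs (v (d k))).
    { rewrite <- Rabs_mult. rewrite Rabs_right; nra. }
    rewrite E. nra. }
  lra.
Qed.

Lemma B_single (X : NormedSpace) d k u j : (j < k)%nat -> u (d j) * u (d j) <= Bk X d k u u.
Proof.
  intros H. induction k. lia. simpl. destruct (Nat.eq_dec j k).
  - subst. pose proof (B_nonneg X d k u). lra.
  - assert (j < k)%nat by lia. specialize (IHk H0). nra.
Qed.

Lemma density (X : NormedSpace) (d : nat -> X) (M : (X -> R) -> Prop)
  (HM : dual_subspace X M) (Hn : norming X M) (g : X -> R) c k eta :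
  in_dual X g -> 0 <= c -> (forall x, Rabs (g x) <= c * ns_norm x) -> eta > 0 ->
  exists m, M m /\ (forall x, Rabs (m x) <= c * ns_norm x) /\
    Bk X d k (fun y => g y - m y) (fun y => g y - m y) < eta.
Proof.
  intros Hg Hc Hgb Heta. apply NNPP; intro Hno.
  assert (Hge : forall m, M m -> (forall x, Rabs (m x) <= c * ns_norm x) ->
            eta <= Bk X d k (fun y => g y - m y) (fun y => g y - m y)).
  { intros m Hm Hb. apply Rnot_lt_le; intro Hl; apply Hno; eauto. }
  pose proof HM as [HMd [HM0 _]].
  set (K := Bk X d k (fun y => 2 * c * ns_norm y) (fun y => 2 * c * ns_norm y)).
  assert (HK : 0 <= K) by apply B_nonneg.
  set (t := eta / (4 * (K + eta + 1))).
  assert (Ht4 : t * (4 * (K + eta + 1)) = eta) by (unfold t; field; lra).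
  assert (Htp : 0 < t) by (unfold t; apply Rdiv_lt_0_compat; lra).
  assert (Ht1 : t <= 1) by nra.
  assert (HtK : t * K <= eta / 4) by nra.
  destruct (approx_inf (fun m => M m /\ forall x, Rabs (m x) <= c * ns_norm x)
              (fun m => Bk X d k (fun y => g y - m y) (fun y => g y - m y)) (t * eta / 2))
    as [m0 [[Hm0 Hb0] Hmin]].
  { exists (fun _ => 0). split; auto. intro x. rewrite Rabs_R0. pose proof (norm_nonneg X x). nra. }
  { intros. apply B_nonneg. }
  { nra. }
  assert (Hm0d : in_dual X m0) by auto.
  set (x := xs X d k (fun y => g y - m0 y)).
  assert (Hall : forall m, M m -> (forall y, Rabs (m y) <= c * ns_norm y) -> m x <= g x - eta / 2).
  { intros m Hm Hb. assert (Hmd : in_dual X m) by auto.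
    pose (mt := fun y => (1 - t) * m0 y + t * m y).
    assert (Mmt : M mt) by (apply M_comb; auto).
    assert (Bmt : forall y, Rabs (mt y) <= c * ns_norm y).
    { intro y. unfold mt. eapply Rle_trans. apply Rabs_triang. rewrite !Rabs_mult.
      rewrite (Rabs_right t), (Rabs_right (1 - t)) by lra.
      specialize (Hb0 y). specialize (Hb y). nra. }
    specialize (Hmin mt (conj Mmt Bmt)). simpl in Hmin.
    replace (fun y => g y - mt y) with (fun y => (fun y => g y - m0 y) y - t * (fun y => m y - m0 y) y) in Hmin
      by (apply functional_extensionality; intro; unfold mt; ring).
    rewrite B_expand in Hmin.
    assert (Hvv : Bk X d k (fun y => m y - m0 y) (fun y => m y - m0 y) <= K).
    { apply B_bound. intro y.
      unfold Rminus. eapply Rle_trans. apply Rabs_triang. rewrite Rabs_Ropp.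
      specialize (Hb0 y). specialize (Hb y). nra. }
    rewrite (B_sub_r X d k (fun y => g y - m0 y) m m0) in Hmin.
    pose proof (B_sub_r X d k (fun y => g y - m0 y) g m0) as Haa.
    unfold x. rewrite !B_eval by auto.
    specialize (Hge m0 Hm0 Hb0).
    set (Baa := Bk X d k (fun y => g y - m0 y) (fun y => g y - m0 y)) in *.
    set (Bam := Bk X d k (fun y => g y - m0 y) m) in *.
    set (Bam0 := Bk X d k (fun y => g y - m0 y) m0) in *.
    set (Bag := Bk X d k (fun y => g y - m0 y) g) in *.
    set (Bvv := Bk X d k (fun y => m y - m0 y) (fun y => m y - m0 y)) in *.
    assert (Htt : t * t * Bvv <= t * t * K) by (apply Rmult_le_compat_l; nra).
    assert (H2 : t * (2 * (Bam - Bam0)) <= t * (t * K + eta / 2)) by lra.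
    apply Rmult_le_reg_l in H2; auto. lra. }
  destruct (Hn x) as [Hub Hlub].
  set (delta := eta / (4 * (c + 1))).
  assert (Hd4 : delta * (4 * (c + 1)) = eta) by (unfold delta; field; lra).
  assert (Hdp : 0 < delta) by (unfold delta; apply Rdiv_lt_0_compat; lra).
  assert (Hex : exists m1, M m1 /\ dnorm X m1 <= 1 /\ ns_norm x - delta < Rabs (m1 x)).
  { apply NNPP; intro Hne.
    assert (ns_norm x <= ns_norm x - delta). 2: lra.
    apply Hlub. intros r [m1 [Hm1 [Hd1 ->]]]. apply Rnot_lt_le. intro Hl. apply Hne. eauto. }
  destruct Hex as [m1 [Hm1 [Hd1 Hx1]]].
  assert (Hm1d : in_dual X m1) by auto.
  pose proof (dnorm_le1 X m1 Hm1d Hd1) as Hb1.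
  pose proof (Hgb x) as Hgx. pose proof (Rle_abs (g x)).
  destruct (Rcase_abs (m1 x)) as [Hneg | Hpos].
  - assert (Hmm : M (fun y => (- c) * m1 y)) by (apply HM; auto).
    assert (Hbb : forall y, Rabs ((- c) * m1 y) <= c * ns_norm y).
    { intro y. rewrite Rabs_mult, Rabs_Ropp, (Rabs_right c) by lra. specialize (Hb1 y). nra. }
    specialize (Hall _ Hmm Hbb). simpl in Hall.
    rewrite Rabs_left in Hx1 by lra. nra.
  - assert (Hmm : M (fun y => c * m1 y)) by (apply HM; auto).
    assert (Hbb : forall y, Rabs (c * m1 y) <= c * ns_norm y).
    { intro y. rewrite Rabs_mult, (Rabs_right c) by lra. specialize (Hb1 y). nra. }
    specialize (Hall _ Hmm Hbb). simpl in Hall.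
    rewrite Rabs_right in Hx1 by lra. nra.
Qed.

Lemma inv_small eps : eps > 0 -> exists N : nat, forall n, (n >= N)%nat -> / (INR n + 1) < eps.
Proof.
  intros He. destruct (archimed_cor1 eps He) as [N [HN HN0]]. exists N. intros n Hn.
  apply le_INR in Hn. apply lt_INR in HN0. simpl in HN0.
  eapply Rle_lt_trans; [|exact HN]. apply Rinv_le_contravar; lra.
Qed.

Lemma inv_pos n : 0 < / (INR n + 1).
Proof. apply Rinv_0_lt_compat. pose proof (pos_INR n). lra. Qed.

Lemma part1 (X : NormedSpace) : separable X -> property_au_star X ->
  forall M : (X -> R) -> Prop,
      dual_subspace X M -> dual_norm_closed X M -> norming X M ->
      forall f : X -> R, in_dual X f -> M f.
Proof.
  intros [d Hd] Hau M HM Hcl Hn f Hf. apply NNPP; intro Hnf.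
  pose proof HM as [HMd [HM0 _]].
  assert (Hr : exists r, r > 0 /\ forall m, M m -> r <= dnorm X (fun x => f x - m x)).
  { apply NNPP; intro Hnr.
    assert (Hs : forall n : nat, exists m, M m /\ dnorm X (fun x => f x - m x) < / (INR n + 1)).
    { intro n. apply NNPP; intro Hn'. apply Hnr. exists (/ (INR n + 1)). split. apply inv_pos.
      intros m Hm. apply Rnot_lt_le. intro. apply Hn'. eauto. }
    pose (u := fun n => proj1_sig (constructive_indefinite_description _ (Hs n))).
    assert (Hu : forall n, M (u n) /\ dnorm X (fun x => f x - u n x) < / (INR n + 1)).
    { intro n. unfold u. destruct (constructive_indefinite_description _ (Hs n)) as [m Hm]. simpl. auto. }
    apply Hnf. apply (Hcl u f); auto.
    - intro n. apply Hu.
    - intros eps Heps. destruct (inv_small eps Heps) as [N HN]. exists N. intros n Hnn.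
      unfold R_dist. rewrite Rminus_0_r. destruct (Hu n) as [Hun Hlt].
      rewrite Rabs_right.
      + rewrite dnorm_sym by auto. specialize (HN n Hnn). lra.
      + apply Rle_ge, dnorm_nonneg, in_dual_sub; auto. }
  destruct Hr as [r [Hr Hrm]].
  destruct (approx_inf (fun m => M m) (fun m => dnorm X (fun x => f x - m x)) (r / 2))
    as [m0 [Hm0 Hmin]].
  { exists (fun _ => 0). auto. }
  { intros m Hm. apply dnorm_nonneg, in_dual_sub; auto. }
  { lra. }
  assert (Hm0d : in_dual X m0) by auto.
  set (g := fun x => f x - m0 x).
  assert (Hg : in_dual X g) by (apply in_dual_sub; auto).
  set (N := dnorm X g).
  assert (HN0 : 0 <= N) by (apply dnorm_nonneg; auto).
  assert (Hgb : forall x, Rabs (g x) <= N * ns_norm x) by (intro; apply dnorm_bound; auto).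
  assert (Hs : forall n : nat, exists m, M m /\ (forall x, Rabs (m x) <= N * ns_norm x) /\
      Bk X d n (fun y => g y - m y) (fun y => g y - m y) < / (INR n + 1) * / (INR n + 1)).
  { intro n. apply density; auto. pose proof (inv_pos n). nra. }
  pose (ms := fun n => proj1_sig (constructive_indefinite_description _ (Hs n))).
  assert (Hms : forall n, M (ms n) /\ (forall x, Rabs (ms n x) <= N * ns_norm x) /\
      Bk X d n (fun y => g y - ms n y) (fun y => g y - ms n y) < / (INR n + 1) * / (INR n + 1)).
  { intro n. unfold ms. destruct (constructive_indefinite_description _ (Hs n)) as [m Hm]. simpl. auto. }
  pose (fs := fun n x => ms n x - g x).
  assert (Hfs : forall n, in_dual X (fs n)).
  { intro n. apply in_dual_sub; auto. apply HMd, Hms. }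
  assert (Hw : weak_star_null X fs).
  { split; auto. intros x eps Heps.
    destruct (Hd x (eps / (4 * (N + 1)))) as [j Hj].
    { apply Rdiv_lt_0_compat; lra. }
    destruct (inv_small (eps / 2)) as [N0 HN0']. lra.
    exists (max N0 (S j)). intros n Hnn. unfold R_dist. rewrite Rminus_0_r.
    replace (fs n x) with (fs n (d j) + fs n (ns_sub x (d j))).
    2:{ rewrite <- (proj1 (Hfs n)). rewrite add_sub. reflexivity. }
    destruct (Hms n) as [_ [Hb HB]].
    assert (H1 : Rabs (fs n (d j)) < eps / 2).
    { pose proof (B_single X d n (fun y => g y - ms n y) j ltac:(lia)) as Hsq. simpl in Hsq.
      specialize (HN0' n ltac:(lia)). pose proof (inv_pos n).
      assert (Hlt : Rabs (fs n (d j)) < / (INR n + 1)).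
      { unfold fs. rewrite Rabs_minus_sym.
        apply Rnot_le_lt. intro Hle.
        pose proof (Rabs_pos (g (d j) - ms n (d j))).
        assert (Rabs (g (d j) - ms n (d j)) * Rabs (g (d j) - ms n (d j)) =
                (g (d j) - ms n (d j)) * (g (d j) - ms n (d j))).
        { rewrite <- Rabs_mult. apply Rabs_right. apply Rle_ge.
          pose proof (Rle_0_sqr (g (d j) - ms n (d j))). unfold Rsqr in *. lra. }
        assert (/ (INR n + 1) * / (INR n + 1) <= Rabs (g (d j) - ms n (d j)) * Rabs (g (d j) - ms n (d j)))
          by (apply Rmult_le_compat; lra).
        lra. }
      lra. }
    assert (H2 : Rabs (fs n (ns_sub x (d j))) <= 2 * N * ns_norm (ns_sub x (d j))).
    { unfold fs. unfold Rminus. eapply Rle_trans. apply Rabs_triang. rewrite Rabs_Ropp.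
      specialize (Hb (ns_sub x (d j))). specialize (Hgb (ns_sub x (d j))). lra. }
    assert (H3 : 2 * N * ns_norm (ns_sub x (d j)) < eps / 2).
    { pose proof (norm_nonneg X (ns_sub x (d j))).
      assert (E : eps / (4 * (N + 1)) * (4 * (N + 1)) = eps) by (field; lra).
      nra. }
    eapply Rle_lt_trans. apply Rabs_triang. lra. }
  specialize (Hau g fs Hg Hw).
  set (gap := 2 * Rmax r (N - r / 2) - N).
  assert (Hgap : gap > 0).
  { unfold gap. destruct (Rle_dec N r).
    - pose proof (Rmax_l r (N - r / 2)). lra.
    - pose proof (Rmax_r r (N - r / 2)). lra. }
  destruct (Hau gap Hgap) as [n0 Hn0]. specialize (Hn0 n0 (le_n _)).
  unfold R_dist in Hn0. rewrite Rminus_0_r in Hn0.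
  destruct (Hms n0) as [Mm [Hb _]].
  assert (Dp : dnorm X (fun x => g x + fs n0 x) <= N).
  { rewrite (dnorm_ext X _ (ms n0)) by (intro; unfold fs; ring).
    apply dnorm_le; auto. }
  set (h := fun x => 1 * m0 x + / 2 * ms n0 x).
  assert (Mh : M h) by (apply M_comb; auto).
  assert (Hhd : in_dual X h) by auto.
  assert (Dm : 2 * Rmax r (N - r / 2) <= dnorm X (fun x => g x - fs n0 x)).
  { rewrite (dnorm_ext X _ (fun x => 2 * (fun x => f x - h x) x))
      by (intro; unfold fs, g, h; field).
    eapply Rle_trans; [|apply dnorm_scal_ge; [apply in_dual_sub; auto | lra]].
    apply Rmult_le_compat_l. lra.
    apply Rmax_lub. apply Hrm; auto.
    specialize (Hmin h Mh). unfold N, g. lra. }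
  assert (gap <= dnorm X (fun x => g x - fs n0 x) - dnorm X (fun x => g x + fs n0 x)) by (unfold gap; lra).
  pose proof (Rle_abs (- (dnorm X (fun x => g x + fs n0 x) - dnorm X (fun x => g x - fs n0 x)))).
  rewrite Rabs_Ropp in H0. lra.
Qed.

Lemma swap4 (X : NormedSpace) (a b c e : X) :
  ns_add (ns_add a b) (ns_add c e) = ns_add (ns_add a c) (ns_add b e).
Proof.
  rewrite <- !ns_add_assoc. f_equal. rewrite !ns_add_assoc. f_equal. apply ns_add_comm.
Qed.

Lemma add_zero_l (X : NormedSpace) (a : X) : ns_add ns_zero a = a.
Proof. rewrite ns_add_comm. apply ns_add_zero. Qed.

Lemma scal_zero_r (X : NormedSpace) a : ns_scal a (@ns_zero X) = ns_zero.
Proof. rewrite <- (scal0 X ns_zero), ns_scal_assoc. replace (a * 0) with 0 by ring. reflexivity. Qed.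

Lemma add_scal_same (X : NormedSpace) (a b : R) (y : X) :
  ns_add (ns_scal a y) (ns_scal b y) = ns_scal (a + b) y.
Proof. rewrite ns_scal_distr_r. reflexivity. Qed.

Definition subsp (X : NormedSpace) (V : X -> Prop) : Prop :=
  V ns_zero /\ (forall v w, V v -> V w -> V (ns_add v w)) /\ (forall a v, V v -> V (ns_scal a v)).

Definition goodf (X : NormedSpace) (V : X -> Prop) (phi : X -> R) : Prop :=
  (forall v w, V v -> V w -> phi (ns_add v w) = phi v + phi w) /\
  (forall a v, V v -> phi (ns_scal a v) = a * phi v) /\
  (forall v, V v -> phi v <= ns_norm v).

Lemma goodf_zero (X : NormedSpace) V phi : subsp X V -> goodf X V phi -> phi ns_zero = 0.
Proof.
  intros [H0 _] [_ [Hs _]]. rewrite <- (scal0 X ns_zero), Hs by auto. ring.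
Qed.

Lemma goodf_abs (X : NormedSpace) V phi : subsp X V -> goodf X V phi ->
  forall v, V v -> Rabs (phi v) <= ns_norm v.
Proof.
  intros HV Hp v Hv. pose proof HV as [_ [_ Hsc]]. pose proof Hp as [_ [Hs Hb]].
  pose proof (Hb v Hv). pose proof (Hb _ (Hsc (-1) v Hv)).
  rewrite Hs, ns_norm_scal in H0 by auto. rewrite Rabs_left in H0 by lra.
  apply Rabs_le. lra.
Qed.

Definition alpha (X : NormedSpace) (V : X -> Prop) (phi : X -> R) (y : X) : R :=
  - epsilon (inhabits 0) (is_lub (fun r => exists v, V v /\ r = phi v - ns_norm (ns_add v y))).

Lemma alpha_lub (X : NormedSpace) V phi y : subsp X V -> goodf X V phi ->
  is_lub (fun r => exists v, V v /\ r = phi v - ns_norm (ns_add v y)) (- alpha X V phi y).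
Proof.
  intros HV Hp. unfold alpha. rewrite Ropp_involutive. apply epsilon_spec.
  pose proof HV as [H0 [Ha Hsc]]. pose proof Hp as [Hpa [Hps Hpb]].
  destruct (completeness (fun r => exists v, V v /\ r = phi v - ns_norm (ns_add v y))) as [L HL].
  - exists (ns_norm (ns_add ns_zero (ns_scal (-1) y)) - phi ns_zero).
    intros r [w [Hw ->]].
    assert (E : ns_add (ns_add w y) (ns_add ns_zero (ns_scal (-1) y)) = w).
    { rewrite swap4, ns_add_zero. rewrite <- (ns_scal_one X y) at 1.
      rewrite add_scal_same. replace (1 + -1) with 0 by ring. rewrite scal0. apply ns_add_zero. }
    pose proof (ns_norm_triangle X (ns_add w y) (ns_add ns_zero (ns_scal (-1) y))).
    rewrite E in H. pose proof (Hpb w Hw). rewrite (goodf_zero X V phi HV Hp). lra.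
  - exists (phi ns_zero - ns_norm (ns_add ns_zero y)). eauto.
  - exists L. exact HL.
Qed.

Lemma alpha_spec (X : NormedSpace) V phi y : subsp X V -> goodf X V phi ->
  forall v, V v -> phi v + alpha X V phi y <= ns_norm (ns_add v y) /\
                   phi v - alpha X V phi y <= ns_norm (ns_add v (ns_scal (-1) y)).
Proof.
  intros HV Hp v Hv. destruct (alpha_lub X V phi y HV Hp) as [Hub Hl].
  pose proof HV as [H0 [Ha Hsc]]. pose proof Hp as [Hpa [Hps Hpb]].
  split.
  - assert (phi v - ns_norm (ns_add v y) <= - alpha X V phi y) by (apply Hub; eauto). lra.
  - assert (- alpha X V phi y <= ns_norm (ns_add v (ns_scal (-1) y)) - phi v). 2: lra.
    apply Hl. intros r [w [Hw ->]].
    assert (E : ns_add (ns_add w y) (ns_add v (ns_scal (-1) y)) = ns_add w v).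
    { rewrite swap4. rewrite <- (ns_scal_one X y) at 1.
      rewrite add_scal_same. replace (1 + -1) with 0 by ring. rewrite scal0. apply ns_add_zero. }
    pose proof (ns_norm_triangle X (ns_add w y) (ns_add v (ns_scal (-1) y))).
    rewrite E in H. pose proof (Hpb _ (Ha w v Hw Hv)). rewrite Hpa in H1 by auto. lra.
Qed.

Definition Vext (X : NormedSpace) (V : X -> Prop) (y : X) : X -> Prop :=
  fun z => exists v t, V v /\ z = ns_add v (ns_scal t y).

Definition ext (X : NormedSpace) (V : X -> Prop) (phi : X -> R) (y : X) : X -> R :=
  fun z => epsilon (inhabits 0)
    (fun r => exists v t, V v /\ z = ns_add v (ns_scal t y) /\ r = phi v + t * alpha X V phi y).

Lemma rep_unique (X : NormedSpace) V phi y : subsp X V -> goodf X V phi ->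
  forall v t v' t', V v -> V v' -> ns_add v (ns_scal t y) = ns_add v' (ns_scal t' y) ->
  phi v + t * alpha X V phi y = phi v' + t' * alpha X V phi y.
Proof.
  intros HV Hp v t v' t' Hv Hv' E.
  pose proof HV as [H0 [Ha Hsc]]. pose proof Hp as [Hpa [Hps Hpb]].
  set (al := alpha X V phi y).
  assert (E2 : ns_add v (ns_scal (-1) v') = ns_scal (t' - t) y).
  { transitivity (ns_add (ns_add v (ns_scal t y)) (ns_add (ns_scal (-1) v') (ns_scal (- t) y))).
    - rewrite swap4, add_scal_same. replace (t + - t) with 0 by ring. rewrite scal0, ns_add_zero; try reflexivity.
    - rewrite E, swap4, add_scal_same. rewrite <- (ns_scal_one X v') at 1.
      rewrite add_scal_same. replace (1 + -1) with 0 by ring. rewrite scal0, add_zero_l.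
      try (f_equal; ring). }
  assert (P : phi v - phi v' = (t' - t) * al).
  { destruct (Req_dec (t' - t) 0) as [Z|Z].
    - rewrite Z, scal0 in E2.
      assert (phi (ns_add v (ns_scal (-1) v')) = 0) by (rewrite E2; apply (goodf_zero X V); auto).
      rewrite Hpa, Hps in H by auto. rewrite Z. lra.
    - assert (Ey : y = ns_scal (/ (t' - t)) (ns_add v (ns_scal (-1) v'))).
      { rewrite E2, ns_scal_assoc. replace (/ (t' - t) * (t' - t)) with 1 by (field; auto).
        rewrite ns_scal_one. reflexivity. }
      assert (Vy : V y) by (rewrite Ey; apply Hsc, Ha, Hsc; auto).
      assert (Hal : al = phi y).
      { pose proof (alpha_spec X V phi y HV Hp y Vy) as [_ A1].
        pose proof (alpha_spec X V phi y HV Hp (ns_scal (-1) y) (Hsc _ _ Vy)) as [A2 _].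
        assert (Z1 : ns_add y (ns_scal (-1) y) = ns_zero).
        { rewrite <- (ns_scal_one X y) at 1. rewrite add_scal_same. replace (1 + -1) with 0 by ring. apply scal0. }
        assert (Z2 : ns_add (ns_scal (-1) y) y = ns_zero) by (rewrite ns_add_comm; auto).
        rewrite Z1, norm_zero in A1. rewrite Z2, norm_zero, Hps in A2 by auto. fold al in A1, A2. lra. }
      assert (Q : phi (ns_add v (ns_scal (-1) v')) = (t' - t) * phi y).
      { rewrite E2, Hps; auto. }
      rewrite Hpa, Hps in Q by auto. rewrite Hal. lra. }
  lra.
Qed.

Lemma ext_val (X : NormedSpace) V phi y : subsp X V -> goodf X V phi ->
  forall v t, V v -> ext X V phi y (ns_add v (ns_scal t y)) = phi v + t * alpha X V phi y.
Proof.
  intros HV Hp v t Hv. unfold ext.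
  match goal with |- epsilon ?i ?P = _ => assert (HP : P (epsilon i P)) end.
  { apply epsilon_spec. exists (phi v + t * alpha X V phi y). exists v, t. auto. }
  destruct HP as [v' [t' [Hv' [E ->]]]]. symmetry. apply rep_unique; auto.
Qed.

Lemma Vext_subsp (X : NormedSpace) V y : subsp X V -> subsp X (Vext X V y).
Proof.
  intros [H0 [Ha Hsc]]. split; [|split].
  - exists ns_zero, 0. split; auto. rewrite scal0, ns_add_zero. reflexivity.
  - intros z1 z2 [v1 [t1 [Hv1 ->]]] [v2 [t2 [Hv2 ->]]]. exists (ns_add v1 v2), (t1 + t2).
    split; auto. rewrite swap4, add_scal_same. reflexivity.
  - intros a z [v [t [Hv ->]]]. exists (ns_scal a v), (a * t). split; auto.
    rewrite ns_scal_distr_l, ns_scal_assoc. reflexivity.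
Qed.

Lemma Vext_incl (X : NormedSpace) V y : forall v, V v -> Vext X V y v.
Proof. intros v Hv. exists v, 0. split; auto. rewrite scal0, ns_add_zero. reflexivity. Qed.

Lemma Vext_y (X : NormedSpace) V y : subsp X V -> Vext X V y y.
Proof. intros [H0 _]. exists ns_zero, 1. split; auto. rewrite ns_scal_one, add_zero_l. reflexivity. Qed.

Lemma ext_agree (X : NormedSpace) V phi y : subsp X V -> goodf X V phi ->
  forall v, V v -> ext X V phi y v = phi v.
Proof.
  intros HV Hp v Hv. replace v with (ns_add v (ns_scal 0 y)) at 1 by (rewrite scal0, ns_add_zero; auto).
  rewrite ext_val by auto. ring.
Qed.

Lemma ext_good (X : NormedSpace) V phi y : subsp X V -> goodf X V phi ->
  goodf X (Vext X V y) (ext X V phi y).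
Proof.
  intros HV Hp. pose proof HV as [H0 [Ha Hsc]]. pose proof Hp as [Hpa [Hps Hpb]].
  set (al := alpha X V phi y).
  split; [|split].
  - intros z1 z2 [v1 [t1 [Hv1 ->]]] [v2 [t2 [Hv2 ->]]].
    rewrite swap4, add_scal_same, !ext_val by auto. rewrite Hpa by auto. fold al. ring.
  - intros a z [v [t [Hv ->]]].
    rewrite ns_scal_distr_l, ns_scal_assoc, !ext_val by auto. rewrite Hps by auto. fold al. ring.
  - intros z [v [t [Hv ->]]]. rewrite ext_val by auto. fold al.
    destruct (Rtotal_order t 0) as [Hn|[Hz|Hpos]].
    + set (s := - t). assert (Hs : 0 < s) by (unfold s; lra).
      pose proof (alpha_spec X V phi y HV Hp (ns_scal (/ s) v) (Hsc _ _ Hv)) as [_ A].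
      fold al in A. rewrite Hps in A by auto.
      assert (E : ns_add v (ns_scal t y) = ns_scal s (ns_add (ns_scal (/ s) v) (ns_scal (-1) y))).
      { rewrite ns_scal_distr_l, !ns_scal_assoc. replace (s * / s) with 1 by (field; lra).
        rewrite ns_scal_one. f_equal. f_equal. unfold s; ring. }
      rewrite E, ns_norm_scal, Rabs_right by lra.
      apply (Rmult_le_compat_l s) in A; [|lra].
      replace (s * (/ s * phi v - al)) with (phi v - s * al) in A by (field; lra).
      unfold s in *. lra.
    + subst t. rewrite scal0, ns_add_zero. rewrite Rmult_0_l, Rplus_0_r. auto.
    + pose proof (alpha_spec X V phi y HV Hp (ns_scal (/ t) v) (Hsc _ _ Hv)) as [A _].
      fold al in A. rewrite Hps in A by auto.
      assert (E : ns_add v (ns_scal t y) = ns_scal t (ns_add (ns_scal (/ t) v) y)).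
      { rewrite ns_scal_distr_l, !ns_scal_assoc. replace (t * / t) with 1 by (field; lra).
        rewrite ns_scal_one. reflexivity. }
      rewrite E, ns_norm_scal, Rabs_right by lra.
      apply (Rmult_le_compat_l t) in A; [|lra].
      replace (t * (/ t * phi v + al)) with (phi v + t * al) in A by (field; lra). lra.
Qed.

Definition ys (X : NormedSpace) (x0 : X) (d : nat -> X) (n : nat) : X :=
  match n with O => x0 | S n => d n end.

Fixpoint chain (X : NormedSpace) (x0 : X) (d : nat -> X) (n : nat) : (X -> Prop) * (X -> R) :=
  match n with
  | O => (fun z => z = ns_zero, fun _ => 0)
  | S n => (Vext X (fst (chain X x0 d n)) (ys X x0 d n),
            ext X (fst (chain X x0 d n)) (snd (chain X x0 d n)) (ys X x0 d n))
  end.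

Definition Vn X x0 d n := fst (chain X x0 d n).
Definition Pn X x0 d n := snd (chain X x0 d n).

Lemma chain_inv X x0 d n : subsp X (Vn X x0 d n) /\ goodf X (Vn X x0 d n) (Pn X x0 d n).
Proof.
  induction n as [|n [IH1 IH2]].
  - unfold Vn, Pn; simpl. split; [split; [|split] | split; [|split]].
    + reflexivity.
    + intros v w -> ->. apply ns_add_zero.
    + intros a v ->. apply scal_zero_r.
    + intros; ring.
    + intros; ring.
    + intros. apply norm_nonneg.
  - unfold Vn, Pn in *; simpl. split. apply Vext_subsp; auto. apply ext_good; auto.
Qed.

Lemma chain_step X x0 d n v : Vn X x0 d n v -> Vn X x0 d (S n) v /\ Pn X x0 d (S n) v = Pn X x0 d n v.
Proof.
  intros Hv. destruct (chain_inv X x0 d n) as [HV Hp]. unfold Vn, Pn in *; simpl. split.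
  - apply Vext_incl; auto.
  - apply ext_agree; auto.
Qed.

Lemma chain_mono X x0 d m n : (m <= n)%nat -> forall v, Vn X x0 d m v ->
  Vn X x0 d n v /\ Pn X x0 d n v = Pn X x0 d m v.
Proof.
  intros H. induction H; intros v Hv.
  - auto.
  - destruct (IHle v Hv) as [A B]. destruct (chain_step X x0 d m0 v A) as [C D]. split; auto. congruence.
Qed.

Lemma ys_in X x0 d n : Vn X x0 d (S n) (ys X x0 d n).
Proof. unfold Vn; simpl. apply Vext_y. apply chain_inv. Qed.

Lemma P1_x0 X x0 d : Pn X x0 d 1 x0 = ns_norm x0.
Proof.
  destruct (chain_inv X x0 d 0) as [HV Hp]. unfold Vn, Pn in *. simpl in *.
  replace x0 with (ns_add (@ns_zero X) (ns_scal 1 x0)) at 2 by (rewrite ns_scal_one, add_zero_l; auto).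
  rewrite ext_val by auto.
  destruct (alpha_lub X (fun z => z = ns_zero) (fun _ => 0) x0 HV Hp) as [Hub Hl].
  assert (A1 : 0 - ns_norm (ns_add ns_zero x0) <= - alpha X (fun z => z = ns_zero) (fun _ => 0) x0)
    by (apply Hub; exists ns_zero; auto).
  assert (A2 : - alpha X (fun z => z = ns_zero) (fun _ => 0) x0 <= 0 - ns_norm (ns_add ns_zero x0)).
  { apply Hl. intros r [v [-> ->]]. lra. }
  rewrite add_zero_l in A1, A2. lra.
Qed.

Definition Wset (X : NormedSpace) (x0 : X) (d : nat -> X) (z : X) : Prop := exists n, Vn X x0 d n z.
Definition Phi (X : NormedSpace) (x0 : X) (d : nat -> X) (z : X) : R :=
  Pn X x0 d (epsilon (inhabits 0%nat) (fun n => Vn X x0 d n z)) z.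

Lemma Phi_val X x0 d n z : Vn X x0 d n z -> Phi X x0 d z = Pn X x0 d n z.
Proof.
  intros Hz. unfold Phi. set (k := epsilon (inhabits 0%nat) (fun n => Vn X x0 d n z)).
  assert (Hk : Vn X x0 d k z) by (apply epsilon_spec; eauto).
  destruct (chain_mono X x0 d k (max k n) ltac:(lia) z Hk) as [_ A].
  destruct (chain_mono X x0 d n (max k n) ltac:(lia) z Hz) as [_ B]. congruence.
Qed.

Lemma W_add X x0 d v w : Wset X x0 d v -> Wset X x0 d w ->
  Wset X x0 d (ns_add v w) /\ Phi X x0 d (ns_add v w) = Phi X x0 d v + Phi X x0 d w.
Proof.
  intros [n Hv] [m Hw]. set (k := max n m).
  destruct (chain_mono X x0 d n k ltac:(lia) v Hv) as [Hv' _].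
  destruct (chain_mono X x0 d m k ltac:(lia) w Hw) as [Hw' _].
  destruct (chain_inv X x0 d k) as [[_ [Ha _]] [Hpa _]].
  split. exists k; auto.
  rewrite !(Phi_val X x0 d k) by auto. auto.
Qed.

Lemma W_scal X x0 d a v : Wset X x0 d v ->
  Wset X x0 d (ns_scal a v) /\ Phi X x0 d (ns_scal a v) = a * Phi X x0 d v.
Proof.
  intros [n Hv]. destruct (chain_inv X x0 d n) as [[_ [_ Hs]] [_ [Hps _]]].
  split. exists n; auto. rewrite !(Phi_val X x0 d n) by auto. auto.
Qed.

Lemma Phi_abs X x0 d v : Wset X x0 d v -> Rabs (Phi X x0 d v) <= ns_norm v.
Proof.
  intros [n Hv]. destruct (chain_inv X x0 d n) as [HV Hp].
  rewrite (Phi_val X x0 d n) by auto. apply (goodf_abs X _ _ HV Hp); auto.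
Qed.

Lemma Phi_diff X x0 d w w' : Wset X x0 d w -> Wset X x0 d w' ->
  Phi X x0 d w' - Phi X x0 d w <= ns_norm (ns_sub w' w).
Proof.
  intros Hw Hw'. destruct (W_scal X x0 d (-1) w Hw) as [A B].
  destruct (W_add X x0 d w' _ Hw' A) as [C D].
  unfold ns_sub. rewrite opp_scal.
  pose proof (Phi_abs X x0 d _ C). rewrite D, B in H. pose proof (Rle_abs (Phi X x0 d w' + -1 * Phi X x0 d w)). lra.
Qed.

Definition Gf (X : NormedSpace) (x0 : X) (d : nat -> X) (x : X) : R :=
  epsilon (inhabits 0) (is_lub (fun r => exists w, Wset X x0 d w /\ r = Phi X x0 d w - ns_norm (ns_sub x w))).

Lemma W_zero X x0 d : Wset X x0 d ns_zero.
Proof. exists 0%nat. unfold Vn. reflexivity. Qed.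

Lemma G_sandwich X x0 d x w : Wset X x0 d w ->
  Phi X x0 d w - ns_norm (ns_sub x w) <= Gf X x0 d x <= Phi X x0 d w + ns_norm (ns_sub x w).
Proof.
  intros Hw.
  assert (UB : forall w1 w2, Wset X x0 d w1 -> Wset X x0 d w2 ->
     Phi X x0 d w1 - ns_norm (ns_sub x w1) <= Phi X x0 d w2 + ns_norm (ns_sub x w2)).
  { intros w1 w2 H1 H2. pose proof (Phi_diff X x0 d w2 w1 H2 H1).
    pose proof (norm_sub_tri X w1 x w2). rewrite (norm_sub_sym X w1 x) in H0. lra. }
  assert (HL : is_lub (fun r => exists w, Wset X x0 d w /\ r = Phi X x0 d w - ns_norm (ns_sub x w)) (Gf X x0 d x)).
  { unfold Gf. apply epsilon_spec.
    destruct (completeness (fun r => exists w, Wset X x0 d w /\ r = Phi X x0 d w - ns_norm (ns_sub x w))) as [L HL].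
    - exists (Phi X x0 d ns_zero + ns_norm (ns_sub x ns_zero)). intros r [w1 [H1 ->]]. apply UB; auto. apply W_zero.
    - exists (Phi X x0 d ns_zero - ns_norm (ns_sub x ns_zero)). exists ns_zero. split; auto. apply W_zero.
    - exists L; auto. }
  destruct HL as [Hub Hl]. split.
  - apply Hub. eauto.
  - apply Hl. intros r [w1 [H1 ->]]. apply UB; auto.
Qed.

Lemma eq_eps a b : (forall eps, eps > 0 -> Rabs (a - b) <= eps) -> a = b.
Proof.
  intros H. destruct (Req_dec a b); auto.
  assert (Rabs (a - b) > 0) by (apply Rabs_pos_lt; lra).
  specialize (H (Rabs (a - b) / 2) ltac:(lra)). lra.
Qed.

Lemma le_eps a b : (forall eps, eps > 0 -> a <= b + eps) -> a <= b.
Proof.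
  intros H. apply Rnot_lt_le. intro Hl. specialize (H ((a - b) / 2) ltac:(lra)). lra.
Qed.

Lemma sub_add (X : NormedSpace) (x y w1 w2 : X) :
  ns_sub (ns_add x y) (ns_add w1 w2) = ns_add (ns_sub x w1) (ns_sub y w2).
Proof.
  unfold ns_sub. rewrite !opp_scal, ns_scal_distr_l. apply swap4.
Qed.

Lemma sub_scal (X : NormedSpace) a (x w : X) :
  ns_sub (ns_scal a x) (ns_scal a w) = ns_scal a (ns_sub x w).
Proof.
  unfold ns_sub. rewrite !opp_scal, ns_scal_distr_l, !ns_scal_assoc. f_equal. f_equal. ring.
Qed.

Lemma hahn_banach (X : NormedSpace) : separable X -> forall x0 : X,
  exists g, in_dual X g /\ (forall x, Rabs (g x) <= ns_norm x) /\ g x0 = ns_norm x0.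
Proof.
  intros [d Hd] x0.
  assert (Hdens : forall x eps, eps > 0 -> exists w, Wset X x0 d w /\ ns_norm (ns_sub x w) < eps).
  { intros x eps He. destruct (Hd x eps He) as [n Hn]. exists (d n). split; auto.
    exists (S (S n)). apply (ys_in X x0 d (S n)). }
  set (G := Gf X x0 d).
  assert (Hb : forall x, Rabs (G x) <= ns_norm x).
  { intro x. apply le_eps. intros eps He. destruct (Hdens x (eps / 2) ltac:(lra)) as [w [Hw Hxw]].
    pose proof (G_sandwich X x0 d x w Hw). pose proof (Phi_abs X x0 d w Hw).
    pose proof (norm_rev_tri X w x). rewrite norm_sub_sym in H1.
    unfold G. apply Rabs_le. destruct H. pose proof (Rle_abs (Phi X x0 d w)). pose proof (Rle_abs (- Phi X x0 d w)). rewrite Rabs_Ropp in H4. lra.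
    }
  exists G. split; [split; [|split]|split].
  - intros x y. apply eq_eps. intros eps He.
    destruct (Hdens x (eps / 4) ltac:(lra)) as [w1 [H1 E1]].
    destruct (Hdens y (eps / 4) ltac:(lra)) as [w2 [H2 E2]].
    destruct (W_add X x0 d w1 w2 H1 H2) as [H12 P12].
    pose proof (G_sandwich X x0 d (ns_add x y) _ H12) as S12.
    pose proof (G_sandwich X x0 d x _ H1) as S1.
    pose proof (G_sandwich X x0 d y _ H2) as S2.
    rewrite sub_add, P12 in S12. pose proof (ns_norm_triangle X (ns_sub x w1) (ns_sub y w2)).
    unfold G. apply Rabs_le. lra.
  - intros a x. apply eq_eps. intros eps He.
    set (e := eps / (2 * (Rabs a + 1))).
    assert (He' : e > 0) by (unfold e; apply Rdiv_lt_0_compat; pose proof (Rabs_pos a); lra).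
    assert (Ee : e * (2 * (Rabs a + 1)) = eps) by (unfold e; field; pose proof (Rabs_pos a); lra).
    destruct (Hdens x e He') as [w [Hw Ew]].
    destruct (W_scal X x0 d a w Hw) as [Haw Paw].
    pose proof (G_sandwich X x0 d (ns_scal a x) _ Haw) as Sa.
    pose proof (G_sandwich X x0 d x _ Hw) as S1.
    rewrite sub_scal, ns_norm_scal, Paw in Sa.
    assert (A1 : Rabs (G (ns_scal a x) - a * Phi X x0 d w) <= Rabs a * ns_norm (ns_sub x w))
      by (unfold G; apply Rabs_le; lra).
    assert (A2 : Rabs (G x - Phi X x0 d w) <= ns_norm (ns_sub x w)) by (unfold G; apply Rabs_le; lra).
    replace (G (ns_scal a x) - a * G x) with ((G (ns_scal a x) - a * Phi X x0 d w) - a * (G x - Phi X x0 d w)) by ring.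
    eapply Rle_trans. apply Rabs_triang. rewrite Rabs_Ropp, Rabs_mult.
    pose proof (Rabs_pos a). pose proof (norm_nonneg X (ns_sub x w)).
    assert (Rabs a * Rabs (G x - Phi X x0 d w) <= Rabs a * ns_norm (ns_sub x w)) by (apply Rmult_le_compat_l; lra).
    assert (Rabs a * ns_norm (ns_sub x w) <= Rabs a * e) by (apply Rmult_le_compat_l; lra).
    nra.
  - exists 1. intro x. rewrite Rmult_1_l. auto.
  - auto.
  - assert (Hx0 : Wset X x0 d x0) by (exists 1%nat; apply (ys_in X x0 d 0)).
    pose proof (G_sandwich X x0 d x0 x0 Hx0). unfold ns_sub in H. rewrite ns_add_opp, norm_zero in H.
    rewrite (Phi_val X x0 d 1) in H by (apply (ys_in X x0 d 0)). rewrite P1_x0 in H. unfold G. lra.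
Qed.

Fixpoint lin (X : NormedSpace) (gs : nat -> X -> R) (k : nat) (r : nat -> R) (x : X) : R :=
  match k with O => 0 | S k => lin X gs k r x + r k * gs k x end.

Lemma lin_dual X gs k r : (forall i, in_dual X (gs i)) -> in_dual X (lin X gs k r).
Proof.
  intros Hg. induction k; simpl. apply in_dual_zero.
  apply (in_dual_ext X (fun x => 1 * lin X gs k r x + r k * gs k x)). intro; ring.
  apply in_dual_comb; auto.
Qed.

Lemma lin_ext X gs k r s x : (forall i, (i < k)%nat -> r i = s i) -> lin X gs k r x = lin X gs k s x.
Proof.
  intros H. induction k; simpl; auto. rewrite IHk by (intros; apply H; lia). rewrite H by lia. auto.
Qed.

Definition trunc (k : nat) (r : nat -> R) (i : nat) : R := if Nat.ltb i k then r i else 0.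

Lemma lin_trunc X gs k r K x : (k <= K)%nat -> lin X gs K (trunc k r) x = lin X gs k r x.
Proof.
  intros H. induction H.
  - apply lin_ext. intros i Hi. unfold trunc. apply Nat.ltb_lt in Hi. rewrite Hi. auto.
  - simpl. rewrite IHle. unfold trunc. replace (Nat.ltb m k) with false. ring.
    symmetry. apply Nat.ltb_ge. auto.
Qed.

Lemma lin_add X gs k r s x : lin X gs k r x + lin X gs k s x = lin X gs k (fun i => r i + s i) x.
Proof. induction k; simpl. ring. rewrite <- IHk. ring. Qed.

Lemma lin_minus X gs k r s x : lin X gs k r x - lin X gs k s x = lin X gs k (fun i => r i - s i) x.
Proof. induction k; simpl. ring. rewrite <- IHk. ring. Qed.

Lemma lin_scal X gs k r a x : a * lin X gs k r x = lin X gs k (fun i => a * r i) x.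
Proof. induction k; simpl. ring. rewrite <- IHk. ring. Qed.

Lemma lin_bound X gs K k e delta x : (forall i x, Rabs (gs i x) <= ns_norm x) -> 0 <= delta ->
  (forall i, Rabs (e i) <= (if Nat.ltb i k then delta else 0)) ->
  Rabs (lin X gs K e x) <= INR (Nat.min K k) * delta * ns_norm x.
Proof.
  intros Hg Hd He. pose proof (norm_nonneg X x). induction K; cbn [lin].
  - rewrite Rabs_R0. replace (Nat.min 0 k) with 0%nat by lia. simpl. lra.
  - eapply Rle_trans. apply Rabs_triang. rewrite Rabs_mult.
    specialize (He K). specialize (Hg K x). pose proof (Rabs_pos (e K)). pose proof (Rabs_pos (gs K x)).
    destruct (Nat.ltb K k) eqn:Hk.
    + apply Nat.ltb_lt in Hk. replace (Nat.min (S K) k) with (S (Nat.min K k)) by lia.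
      rewrite S_INR.
      assert (Rabs (e K) * Rabs (gs K x) <= delta * ns_norm x) by (apply Rmult_le_compat; lra). nra.
    + apply Nat.ltb_ge in Hk. replace (Nat.min (S K) k) with (Nat.min K k) by lia.
      assert (Rabs (e K) = 0) by (pose proof (Rabs_pos (e K)); lra). rewrite H2. lra.
Qed.

Fixpoint comp (n i : nat) : nat :=
  match i with O => fst (of_nat n) | S i => comp (snd (of_nat n)) i end.

Lemma comp_surj (z : nat -> nat) k : exists n, forall i, (i < k)%nat -> comp n i = z i.
Proof.
  revert z. induction k; intros z.
  - exists 0%nat. intros; lia.
  - destruct (IHk (fun i => z (S i))) as [n' Hn']. exists (to_nat (z 0%nat, n')).
    intros [|i] Hi; cbn [comp]; rewrite cancel_of_to; cbn [fst snd]; auto. apply Hn'. lia.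
Qed.

Definition coefs (k n : nat) (i : nat) : R :=
  (INR (comp n (2 * i)) - INR (comp n (2 * i + 1))) / (INR k + 1).

Definition dd (X : NormedSpace) (gs : nat -> X -> R) (N : nat) : X -> R :=
  lin X gs (fst (of_nat N)) (coefs (fst (of_nat N)) (snd (of_nat N))).

Lemma INR_Zsplit (z : Z) : INR (Z.to_nat z) - INR (Z.to_nat (- z)) = IZR z.
Proof.
  rewrite !INR_IZR_INZ. destruct (Z_le_gt_dec 0 z).
  - rewrite Z2Nat.id by lia. replace (Z.to_nat (- z)) with 0%nat by lia. simpl. ring.
  - rewrite (Z2Nat.id (- z)) by lia. replace (Z.to_nat z) with 0%nat by lia. rewrite opp_IZR. simpl. ring.
Qed.

Lemma dnorm_approx (X : NormedSpace) (f h : X -> R) c : in_dual X f -> in_dual X h -> 0 <= c ->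
  (forall x, Rabs (f x - h x) <= c * ns_norm x) -> dnorm X (fun x => f x - h x) <= c.
Proof. intros. apply dnorm_le; auto. apply in_dual_sub; auto. Qed.

Lemma approx X gs (Hgd : forall i, in_dual X (gs i)) (Hgb : forall i x, Rabs (gs i x) <= ns_norm x)
  k r eps : eps > 0 -> exists N, dnorm X (fun x => lin X gs k r x - dd X gs N x) < eps.
Proof.
  intros He. destruct (inv_small (eps / (INR k + 1))) as [K0 HK0].
  { apply Rdiv_lt_0_compat; auto. pose proof (pos_INR k). lra. }
  set (K := max K0 k).
  set (z := fun i => if Nat.ltb i k then up (r i * (INR K + 1)) else 0%Z).
  set (zc := fun m => if Nat.even m then Z.to_nat (z (Nat.div2 m)) else Z.to_nat (- z (Nat.div2 m))).
  destruct (comp_surj zc (2 * K + 2)) as [n Hn].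
  exists (to_nat (K, n)). unfold dd. rewrite cancel_of_to. simpl.
  assert (HKp : 0 < INR K + 1) by (pose proof (pos_INR K); lra).
  assert (Hc : forall i, (i < K)%nat -> coefs K n i = IZR (z i) / (INR K + 1)).
  { intros i Hi. unfold coefs. rewrite !Hn by lia. unfold zc.
    replace (Nat.even (2 * i)) with true by (symmetry; apply Nat.even_mul; auto).
    replace (Nat.even (2 * i + 1)) with false.
    2:{ rewrite Nat.even_add, Nat.even_mul. reflexivity. }
    replace (Nat.div2 (2 * i)) with i by (symmetry; apply Nat.div2_double).
    replace (Nat.div2 (2 * i + 1)) with i.
    2:{ replace (2 * i + 1)%nat with (S (2 * i)) by lia. symmetry. apply Nat.div2_succ_double. }
    rewrite INR_Zsplit. reflexivity. }
  assert (Hfd : in_dual X (lin X gs K (coefs K n))) by (apply lin_dual; auto).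
  apply Rle_lt_trans with (INR k * / (INR K + 1)).
  - apply dnorm_approx; auto. apply lin_dual; auto.
    + apply Rmult_le_pos. apply pos_INR. left. apply Rinv_0_lt_compat. auto.
    + intro x. rewrite <- (lin_trunc X gs k r K x) by lia.
      rewrite (lin_ext X gs K (coefs K n) (fun i => IZR (z i) / (INR K + 1)) x Hc).
      rewrite lin_minus.
      eapply Rle_trans. apply (lin_bound X gs K k _ (/ (INR K + 1))); auto.
      { left. apply Rinv_0_lt_compat; auto. }
      { intro i. unfold trunc, z. destruct (Nat.ltb i k).
        - destruct (archimed (r i * (INR K + 1))) as [A1 A2].
          apply Rabs_le. split.
          + apply (Rmult_le_reg_l (INR K + 1)); auto. unfold Rdiv.
            replace ((INR K + 1) * (r i - IZR (up (r i * (INR K + 1))) * / (INR K + 1))) with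
              (r i * (INR K + 1) - IZR (up (r i * (INR K + 1)))) by (field; lra).
            replace ((INR K + 1) * - / (INR K + 1)) with (-1) by (field; lra). lra.
          + apply (Rmult_le_reg_l (INR K + 1)); auto. unfold Rdiv.
            replace ((INR K + 1) * (r i - IZR (up (r i * (INR K + 1))) * / (INR K + 1))) with
              (r i * (INR K + 1) - IZR (up (r i * (INR K + 1)))) by (field; lra).
            replace ((INR K + 1) * / (INR K + 1)) with 1 by (field; lra). lra.
        - unfold Rdiv. rewrite Rmult_0_l, Rminus_0_r, Rabs_R0. lra. }
      replace (Nat.min K k) with k by lia. lra.
  - specialize (HK0 K ltac:(lia)). pose proof (pos_INR k).
    apply (Rmult_lt_compat_l (INR k + 1)) in HK0; [|lra].
    replace ((INR k + 1) * (eps / (INR k + 1))) with eps in HK0 by (field; lra).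
    assert (0 < / (INR K + 1)) by (apply Rinv_0_lt_compat; auto). nra.
Qed.

Lemma bound_sub (X : NormedSpace) f h x : in_dual X f -> in_dual X h ->
  Rabs (f x - h x) <= dnorm X (fun y => f y - h y) * ns_norm x.
Proof. intros. apply (dnorm_bound X (fun y => f y - h y)). apply in_dual_sub; auto. Qed.

Lemma dnorm_tri (X : NormedSpace) f u h : in_dual X f -> in_dual X u -> in_dual X h ->
  dnorm X (fun x => f x - h x) <= dnorm X (fun x => f x - u x) + dnorm X (fun x => u x - h x).
Proof.
  intros Hf Hu Hh. apply dnorm_le. apply in_dual_sub; auto.
  pose proof (dnorm_nonneg X _ (in_dual_sub X f u Hf Hu)).
  pose proof (dnorm_nonneg X _ (in_dual_sub X u h Hu Hh)). lra.
  intro x. replace (f x - h x) with ((f x - u x) + (u x - h x)) by ring.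
  eapply Rle_trans. apply Rabs_triang.
  pose proof (bound_sub X f u x Hf Hu). pose proof (bound_sub X u h x Hu Hh). lra.
Qed.

Definition Mspan (X : NormedSpace) (gs : nat -> X -> R) (f : X -> R) : Prop :=
  in_dual X f /\ forall eps, eps > 0 -> exists k r, dnorm X (fun x => f x - lin X gs k r x) < eps.

Lemma part2 (X : NormedSpace) : separable X ->
  (forall M : (X -> R) -> Prop,
      dual_subspace X M -> dual_norm_closed X M -> norming X M ->
      forall f : X -> R, in_dual X f -> M f) -> dual_separable X.
Proof.
  intros Hsep Hall. pose proof Hsep as [d Hd].
  assert (Hg : forall j, exists g, in_dual X g /\ (forall x, Rabs (g x) <= ns_norm x) /\ g (d j) = ns_norm (d j))
    by (intro j; apply hahn_banach; auto).
  pose (gs := fun j => proj1_sig (constructive_indefinite_description _ (Hg j))).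
  assert (Hgs : forall j, in_dual X (gs j) /\ (forall x, Rabs (gs j x) <= ns_norm x) /\ gs j (d j) = ns_norm (d j)).
  { intro j. unfold gs. destruct (constructive_indefinite_description _ (Hg j)) as [g Hg']. simpl. auto. }
  assert (Hgd : forall j, in_dual X (gs j)) by (intro; apply Hgs).
  assert (Hgb : forall j x, Rabs (gs j x) <= ns_norm x) by (intro; apply Hgs).
  assert (Hlin : forall k r, in_dual X (lin X gs k r)) by (intros; apply lin_dual; auto).
  assert (HM : forall f, in_dual X f -> Mspan X gs f).
  { apply Hall.
    - split; [|split; [|split]].
      + intros f [Hf _]. auto.
      + split. apply in_dual_zero. intros eps He. exists 0%nat, (fun _ => 0). simpl.
        eapply Rle_lt_trans; [|exact He]. apply dnorm_le.
        apply (in_dual_sub X (fun _ => 0) (fun _ => 0)); apply in_dual_zero. lra.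
        intro x. rewrite Rminus_0_r, Rabs_R0. pose proof (norm_nonneg X x). lra.
      + intros f h [Hf Af] [Hh Ah]. split. apply in_dual_add; auto.
        intros eps He. destruct (Af (eps / 2) ltac:(lra)) as [k [r Hr]].
        destruct (Ah (eps / 2) ltac:(lra)) as [k' [s Hs]].
        exists (k + k')%nat, (fun i => trunc k r i + trunc k' s i).
        apply Rle_lt_trans with (dnorm X (fun x => f x - lin X gs k r x) + dnorm X (fun x => h x - lin X gs k' s x)); [|lra].
        apply dnorm_le. apply in_dual_sub; auto. apply in_dual_add; auto.
        pose proof (dnorm_nonneg X _ (in_dual_sub X f _ Hf (Hlin k r))).
        pose proof (dnorm_nonneg X _ (in_dual_sub X h _ Hh (Hlin k' s))). lra.
        intro x. rewrite <- lin_add, (lin_trunc X gs k r) by lia. rewrite (lin_trunc X gs k' s) by lia.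
        replace (f x + h x - (lin X gs k r x + lin X gs k' s x)) with
          ((f x - lin X gs k r x) + (h x - lin X gs k' s x)) by ring.
        eapply Rle_trans. apply Rabs_triang.
        pose proof (bound_sub X f (lin X gs k r) x Hf (Hlin k r)).
        pose proof (bound_sub X h (lin X gs k' s) x Hh (Hlin k' s)). lra.
      + intros a f [Hf Af]. split. apply in_dual_scal; auto.
        intros eps He.
        assert (Hp : eps / (Rabs a + 1) > 0) by (apply Rdiv_lt_0_compat; pose proof (Rabs_pos a); lra).
        destruct (Af _ Hp) as [k [r Hr]]. exists k, (fun i => a * r i).
        apply Rle_lt_trans with (Rabs a * dnorm X (fun x => f x - lin X gs k r x)).
        * apply dnorm_le. apply in_dual_sub; auto. apply in_dual_scal; auto.
          apply Rmult_le_pos. apply Rabs_pos. apply dnorm_nonneg, in_dual_sub; auto.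
          intro x. rewrite <- lin_scal. replace (a * f x - a * lin X gs k r x) with (a * (f x - lin X gs k r x)) by ring.
          rewrite Rabs_mult. rewrite Rmult_assoc. apply Rmult_le_compat_l. apply Rabs_pos.
          apply bound_sub; auto.
        * pose proof (Rabs_pos a).
          apply (Rmult_lt_compat_l (Rabs a + 1)) in Hr; [|lra].
          replace ((Rabs a + 1) * (eps / (Rabs a + 1))) with eps in Hr by (field; lra).
          pose proof (dnorm_nonneg X _ (in_dual_sub X f _ Hf (Hlin k r))). nra.
    - intros u f Hu Hf Hcv. split; auto. intros eps He.
      destruct (Hcv (eps / 2) ltac:(lra)) as [n Hn]. specialize (Hn n (le_n _)).
      unfold R_dist in Hn. rewrite Rminus_0_r in Hn.
      destruct (Hu n) as [Hun Aun]. destruct (Aun (eps / 2) ltac:(lra)) as [k [r Hr]].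
      exists k, r. eapply Rle_lt_trans. apply (dnorm_tri X f (u n)); auto.
      rewrite dnorm_sym by auto. pose proof (Rle_abs (dnorm X (fun x => u n x - f x))). lra.
    - intro x. split.
      + intros z [m [[Hm _] [Hd1 ->]]]. apply dnorm_le1; auto.
      + intros b Hb. apply le_eps. intros eps He.
        destruct (Hd x (eps / 2) ltac:(lra)) as [j Hj].
        assert (Mg : Mspan X gs (gs j)).
        { split; auto. intros e Hee. exists (S j), (fun i => if Nat.eqb i j then 1 else 0).
          eapply Rle_lt_trans; [|exact Hee]. apply dnorm_le. apply in_dual_sub; auto. lra.
          intro y. simpl. rewrite Nat.eqb_refl.
          assert (Z : forall k, (k <= j)%nat -> lin X gs k (fun i => if Nat.eqb i j then 1 else 0) y = 0).
          { induction k; intros Hk; simpl; auto. rewrite IHk by lia.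
            replace (Nat.eqb k j) with false by (symmetry; apply Nat.eqb_neq; lia). ring. }
          rewrite Z by lia. replace (gs j y - (0 + 1 * gs j y)) with 0 by ring. rewrite Rabs_R0.
          pose proof (norm_nonneg X y). lra. }
        assert (Dg : dnorm X (gs j) <= 1).
        { apply dnorm_le; auto. lra. intro; rewrite Rmult_1_l; auto. }
        assert (Hbj : Rabs (gs j x) <= b) by (apply Hb; exists (gs j); auto).
        assert (E : gs j x = gs j (d j) + gs j (ns_sub x (d j))).
        { rewrite <- (proj1 (Hgd j)). rewrite add_sub. auto. }
        pose proof (Hgb j (ns_sub x (d j))). pose proof (norm_rev_tri X x (d j)).
        destruct Hgs with j as [_ [_ Ej]].
        pose proof (Rle_abs (gs j x)). pose proof (Rle_abs (- gs j (ns_sub x (d j)))) as HH. rewrite Rabs_Ropp in HH.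
        lra. }
  exists (dd X gs). split.
  - intro N. unfold dd. apply Hlin.
  - intros f Hf eps He. destruct (HM f Hf) as [_ A]. destruct (A (eps / 2) ltac:(lra)) as [k [r Hr]].
    destruct (approx X gs Hgd Hgb k r (eps / 2) ltac:(lra)) as [N HN].
    exists N. eapply Rle_lt_trans. apply (dnorm_tri X f (lin X gs k r)); auto.
    unfold dd; apply Hlin. lra.
Qed.

Theorem proposition2p2 (X : NormedSpace) :
  complete X -> separable X -> property_au_star X ->
  (forall M : (X -> R) -> Prop,
      dual_subspace X M -> dual_norm_closed X M -> norming X M ->
      forall f : X -> R, in_dual X f -> M f)
  /\ dual_separable X.
Proof.
  intros _ Hs Hau.
  assert (H1 : forall M : (X -> R) -> Prop,
      dual_subspace X M -> dual_norm_closed X M -> norming X M ->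
      forall f : X -> R, in_dual X f -> M f) by (apply part1; auto).
  split; auto. apply part2; auto.
Qed.
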